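(* Let $\eta\ge2$, let $P\in\mathfrak N_\eta$, let $R$ be a retract of $P$ which is a tower of nice sections, and let $R(\ell)=\{x,y,z\}$ be a 3-element level set of $R$ with $\lambda(x)\le\lambda(y)\le\lambda(z)$. Then $\lambda(z)-\lambda(x)\le\eta-1$, and in case of equality $\lambda(x)<\lambda(y)<\lambda(z)$.
   Context: All posets are finite; $h_P$ is the height; level sets $P(0)=\min P$, $P(k+1)=\min(P\setminus\bigcup_{i\le k}P(i))$; $A<B$ means $a<b$ for all $a\in A,b\in B$. A retract of $P$ is the image of an idempotent order-preserving self-map; $R(\ell)$ denotes the level sets of $R$ itself, while $\lambda(x)$ denotes the index $k$ with $x\in P(k)$ (the level in $P$). A section is either a 2-element antichain or a poset $P$ of height $h_P\ge1$ with carrier $\{c_{k,j}:k\in[0,h_P],j\in\{0,1,2\}\}$ such that: $c_{0,j}<\dots<c_{h_P,j}$ for each $j$; each $\{c_{k,0},c_{k,1},c_{k,2}\}$ is an antichain; $c_{k,i}<c_{\ell,j}\Rightarrow c_{k,i+1}<c_{\ell,j+1}$ (indices mod 3); and for no $k$ is $P(k)<P(k+1)$ with both 3-element. A section is nice if for all $x<y$: $\{z:z>x\}\not\subseteq\{z:z\ge y\}$ and $\{z:z<y\}\not\subseteq\{z:z\le x\}$. A tower of nice sections is an ordinal sum of nice sections. The horizon of a nice section $P$ of height $\ge2$ is the smallest $\eta\in\mathbb N$ with $P(k)<P(k+\eta)$ for all $k\in[0,h_P-\eta]$; $\mathfrak N_\eta$ is the class of nice sections of height $\ge2$ with horizon $\eta$.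 *)

(* Defs.v *)
From mathcomp Require Import all_boot all_order.
Set Implicit Arguments. Unset Strict Implicit. Unset Printing Implicit Defensive.
Import Order.Theory.
Local Open Scope order_scope.

(* A finite poset is a finPOrderType T; sub-posets (retracts, sections, ...)
   are subsets A : {set T} carrying the induced order. *)
Section Posets.
Context {d : Order.disp_t} {T : finPOrderType d}.

Definition set_lt (A B : {set T}) : bool :=
  [forall a in A, forall b in B, a < b].

Definition is_chain (C : {set T}) : bool :=
  [forall x in C, forall y in C, (x <= y) || (y <= x)].

Definition height (A : {set T}) : nat :=
  \max_(C : {set T} | (C \subset A) && is_chain C) #|C|.-1.

Definition minset (B : {set T}) : {set T} :=
  [set x in B | [forall y in B, ~~ (y < x)]].

(* rem_lev A k = A minus the union of the levels A(0..k-1) *)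
Fixpoint rem_lev (A : {set T}) (k : nat) : {set T} :=
  match k with
  | 0 => A
  | k'.+1 => rem_lev A k' :\: minset (rem_lev A k')
  end.

Definition level (A : {set T}) (k : nat) : {set T} := minset (rem_lev A k).

Definition antichain (A : {set T}) : bool :=
  [forall x in A, forall y in A, (x != y) ==> ~~ ((x <= y) || (y <= x))].

Definition is_section (A : {set T}) : Prop :=
  (#|A| = 2 /\ antichain A) \/
  (let h := height A in
   1 <= h /\
   (exists c : nat -> 'I_3 -> T,
     (forall k j, k <= h -> c k j \in A) /\
     (forall k j k' j', k <= h -> k' <= h -> c k j = c k' j' -> k = k' /\ j = j') /\
     (forall x, x \in A -> exists k j, k <= h /\ c k j = x) /\
     (forall k j, k < h -> c k j < c k.+1 j) /\
     (forall k, k <= h -> antichain [set c k j | j : 'I_3]) /\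
     (forall k i l j, k <= h -> l <= h ->
        c k i < c l j -> c k (ordS i) < c l (ordS j)) /\
     (forall k, ~ (set_lt (level A k) (level A k.+1) /\
                   #|level A k| = 3 /\ #|level A k.+1| = 3)))).

Definition is_nice (A : {set T}) : Prop :=
  forall x y, x \in A -> y \in A -> x < y ->
    ~ ([set z in A | x < z] \subset [set z in A | y <= z]) /\
    ~ ([set z in A | z < y] \subset [set z in A | z <= x]).

Definition nice_section (A : {set T}) : Prop := is_section A /\ is_nice A.

(* A is an ordinal sum S_0 (+) S_1 (+) ... of nice sections *)
Definition tower_of_nice_sections (A : {set T}) : Prop :=
  exists s : seq {set T},
    A = \bigcup_(S <- s) S /\
    (forall S, S \in s -> nice_section S) /\
    (forall i j, i < j < size s -> set_lt (nth set0 s i) (nth set0 s j)).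

Definition horizon_cond (A : {set T}) (eta : nat) : bool :=
  [forall k : 'I_(height A).+1,
     (k + eta <= height A)%N ==> set_lt (level A k) (level A (k + eta))].

Definition has_horizon (A : {set T}) (eta : nat) : Prop :=
  horizon_cond A eta /\ forall e, (e < eta)%N -> ~~ horizon_cond A e.

Definition in_N (eta : nat) (A : {set T}) : Prop :=
  nice_section A /\ 2 <= height A /\ has_horizon A eta.

Definition is_retract (R : {set T}) : Prop :=
  exists f : T -> T,
    (forall x y, x <= y -> f x <= f y) /\
    (forall x, f (f x) = f x) /\
    R = f @: [set: T].

End Posets.

(* Main.v *)
Require Import Defs.
From mathcomp Require Import all_boot all_order.
From mathcomp Require Import zify.
Import Order.Theory.
Local Open Scope order_scope.

Section Gen.
Context {d : Order.disp_t} {T : finPOrderType d}.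
Implicit Types A B C : {set T}.

Lemma mnsP B x : reflect (x \in B /\ forall y, y \in B -> ~~ (y < x)) (x \in Defs.minset B).
Proof.
rewrite /Defs.minset inE; apply: (iffP andP) => [[-> /forall_inP H]|[-> H]]; split => //.
by apply/forall_inP.
Qed.

Lemma minset_sub B : Defs.minset B \subset B.
Proof. by apply/subsetP => x /mnsP []. Qed.

Lemma rem_lev_sub A k : rem_lev A k \subset A.
Proof.
elim: k => [|k IH] //=; apply: subset_trans IH; exact: subsetDl.
Qed.

Lemma rem_lev_mono A i j : (i <= j)%N -> rem_lev A j \subset rem_lev A i.
Proof.
move=> /subnK <-; elim: (j - i)%N => [|n IH] //.
rewrite addSn /=; apply: subset_trans IH; exact: subsetDl.
Qed.

Lemma minset_below {B v} : v \in B -> exists2 u, u \in Defs.minset B & u <= v.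
Proof.
have: forall n v, (#|[set w in B | (w <= v)%O]| <= n)%N -> v \in B ->
   exists2 u, u \in Defs.minset B & u <= v; last by move=> H; apply: H.
elim=> [|n IH] {}v Hc Hv.
  have: v \in [set w in B | w <= v] by rewrite inE Hv lexx.
  by move: Hc; rewrite leqn0 => /eqP/cards0_eq ->; rewrite inE.
case: (boolP (v \in Defs.minset B)) => [Hm|Hm]; first by exists v.
have [y yB yv]: exists2 y, y \in B & y < v.
  apply/exists_inP; move: Hm; rewrite /Defs.minset inE Hv /= negb_forall_in.
  by case/exists_inP => y yB; rewrite negbK => ?; apply/exists_inP; exists y.
suff /IH : (#|[set w in B | (w <= y)%O]| <= n)%N.
  by case/(_ yB) => u um uy; exists u => //; apply: le_trans uy (ltW yv).
rewrite -ltnS; apply: leq_trans Hc; apply: proper_card; apply/properP; split.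
  apply/subsetP => w; rewrite !inE => /andP[-> wy] /=; exact: le_trans wy (ltW yv).
exists v; first by rewrite inE Hv lexx.
by rewrite inE Hv /=; apply/negP => vy; move: (lt_le_trans yv vy); rewrite ltxx.
Qed.

Lemma minset_n0 B : B != set0 -> Defs.minset B != set0.
Proof.
case/set0Pn => v /minset_below [u um _]; apply/set0Pn; by exists u.
Qed.

Lemma rem_lev_card A k : (#|rem_lev A k| <= #|A| - k)%N.
Proof.
elim: k => [|k IH] /=; first by rewrite subn0.
case: (eqVneq (rem_lev A k) set0) => [->|ne].
  by rewrite set0D cards0.
have := minset_n0 _ ne; case/set0Pn => m mm.
rewrite subnS -ltnS; apply: leq_trans _ (leq_trans IH (leqSpred _)).
apply: proper_card; apply/properP; split; first exact: subsetDl.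
by exists m; [move: mm => /mnsP [] | rewrite inE mm].
Qed.

Lemma mem_level A k x : x \in level A k -> x \in rem_lev A k.
Proof. by move/mnsP=> []. Qed.
Arguments mem_level {A k x}.

Lemma lev_lt {A i j u v} : u \in level A i -> v \in level A j -> u < v -> (i < j)%N.
Proof.
move=> /mem_level ui /mnsP [_ vm] uv; rewrite ltnNge; apply/negP => ji.
have: u \in rem_lev A j by apply: (subsetP (rem_lev_mono A _ _ ji)).
by move/vm; rewrite uv.
Qed.

Lemma lev_below {A} i {j v} : (i <= j)%N -> v \in level A j ->
  exists2 u, u \in level A i & u <= v.
Proof.
move=> ij /mem_level vj; apply: minset_below.
exact: (subsetP (rem_lev_mono A _ _ ij)).
Qed.

Lemma lev_exists A w : w \in A -> exists k, w \in level A k.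
Proof.
move=> wA.
have ex : exists n, w \notin rem_lev A n.
  exists #|A|; apply/negP => H.
  have := rem_lev_card A #|A|; rewrite subnn leqn0 => /eqP/cards0_eq E.
  by rewrite E inE in H.
case: (ex_minnP ex) => n wn nmin.
case: n wn nmin => [|n] wn nmin; first by rewrite /= wA in wn.
exists n; have wr : w \in rem_lev A n.
  by apply/negPn/negP => H; have := nmin _ H; rewrite ltnn.
by move: wn; rewrite /= inE wr andbT negbK.
Qed.

Lemma lev_chain {A j v} : v \in level A j ->
  exists C, [/\ C \subset A, is_chain C, #|C| = j.+1 & forall c, c \in C -> c <= v].
Proof.
elim: j v => [|j IH] v vj.
  exists [set v]; split.
  - rewrite sub1set; exact: (subsetP (rem_lev_sub A 0)) _ (mem_level vj).
  - by apply/forall_inP => a; rewrite inE => /eqP ->; apply/forall_inP => b;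
      rewrite inE => /eqP ->; rewrite lexx.
  - by rewrite cards1.
  - by move=> c; rewrite inE => /eqP ->.
have vr := mem_level vj; move: (vr); rewrite /= inE => /andP [vn vr'].
have [u uj uv] := minset_below vr'.
have uv' : u < v by rewrite lt_neqAle uv andbT; apply/eqP => E; rewrite -E uj in vn.
have [C [CA Cc Ccard Cle]] := IH u uj.
have vC : v \notin C.
  by apply/negP => /Cle vu; move: (le_lt_trans vu uv'); rewrite ltxx.
exists (v |: C); split.
- rewrite subUset sub1set CA andbT; exact: (subsetP (rem_lev_sub A _)) _ vr.
- apply/forall_inP => a; rewrite in_setU1 => /orP [/eqP ->|aC];
  apply/forall_inP => b; rewrite in_setU1 => /orP [/eqP ->|bC].
  + by rewrite lexx.
  + by rewrite (le_trans (Cle _ bC) uv) orbT.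
  + by rewrite (le_trans (Cle _ aC) uv).
  + by move/forall_inP: Cc => /(_ a aC) /forall_inP /(_ b bC).
- by rewrite cardsU1 vC Ccard.
- move=> c; rewrite in_setU1 => /orP [/eqP ->|cC]; first exact: lexx.
  exact: le_trans (Cle _ cC) uv.
Qed.

Lemma lev_height {A j v} : v \in level A j -> (j <= height A)%N.
Proof.
move=> /lev_chain [C [CA Cc Ccard _]].
have := @leq_bigmax_cond _ (fun C => (C \subset A) && is_chain C) (fun C => #|C|.-1) C.
by rewrite CA Cc Ccard /= => H; apply: H.
Qed.

End Gen.


Section Sum.
Context {d : Order.disp_t} {T : finPOrderType d}.
Implicit Types A B C : {set T}.

Lemma set_ltP B C : reflect (forall b c, b \in B -> c \in C -> b < c) (set_lt B C).
Proof.
apply: (iffP forall_inP) => [H b c bB cC|H b bB].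
  by move/forall_inP: (H b bB) => /(_ c cC).
by apply/forall_inP => c cC; apply: H.
Qed.

Lemma minset_union B C : set_lt B C -> B != set0 ->
  Defs.minset (B :|: C) = Defs.minset B.
Proof.
move=> /set_ltP lt /set0Pn [b0 b0B]; apply/setP => x.
apply/mnsP/mnsP => [[xU H]|[xB H]].
  have xB : x \in B.
    move: xU; rewrite in_setU => /orP [//|xC].
    by move: (H b0); rewrite in_setU b0B (lt _ _ b0B xC) => /(_ isT).
  by split => // y yB; apply: H; rewrite in_setU yB.
split; first by rewrite in_setU xB.
move=> y; rewrite in_setU => /orP [/H //|yC].
apply/negP => yx; have := lt _ _ xB yC; by rewrite lt_gtF.
Qed.

Lemma rem_lev_set0 k : rem_lev set0 k = (set0 : {set T}).
Proof. by elim: k => //= k ->; rewrite set0D. Qed.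

Lemma rem_lev_N B : exists N, forall k, (rem_lev B k == set0) = (N <= k)%N.
Proof.
have ex : exists n, rem_lev B n == set0.
  exists #|B|; have := rem_lev_card B #|B|; rewrite subnn leqn0 => /eqP/cards0_eq ->.
  by [].
case: (ex_minnP ex) => N HN Nmin; exists N => k.
apply/idP/idP => [/Nmin //|/subnK <-].
elim: (k - N)%N => [//|n IH]; by rewrite addSn /= (eqP IH) set0D.
Qed.

Lemma rem_lev_union B C N : set_lt B C ->
  (forall k, (rem_lev B k == set0) = (N <= k)%N) ->
  forall k, rem_lev (B :|: C) k = rem_lev B k :|: rem_lev C (k - N).
Proof.
move=> lt HN; elim=> [|k IH]; first by [].
rewrite /=.
rewrite IH; case: (ltnP k N) => kN.
  have ne : rem_lev B k != set0 by rewrite HN -ltnNge.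
  have -> : (k - N = 0)%N by apply/eqP; rewrite subn_eq0 ltnW.
  have -> : (k.+1 - N = 0)%N by apply/eqP; rewrite subn_eq0.
  have lt' : set_lt (rem_lev B k) C.
    apply/set_ltP => b c bB cC; move/set_ltP: lt; apply => //.
    exact: (subsetP (rem_lev_sub B k)).
  rewrite /= minset_union // setDUl; congr (_ :|: _).
  apply/setP => c; rewrite inE; case cC: (c \in C); rewrite ?andbF ?andbT //.
  apply/negP => /mnsP [cB _]; move/set_ltP: lt' => /(_ _ _ cB cC); by rewrite ltxx.
have e0 : rem_lev B k = set0 by apply/eqP; rewrite HN.
have e1 : rem_lev B k.+1 = set0 by apply/eqP; rewrite HN (leq_trans kN).
by rewrite e0 set0D !set0U subSn.
Qed.

Lemma level_union B C : set_lt B C -> exists N, forall k,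
  level (B :|: C) k = if (k < N)%N then level B k else level C (k - N).
Proof.
move=> lt; have [N HN] := rem_lev_N B; exists N => k.
rewrite /level (rem_lev_union _ _ _ lt HN); case: ltnP => kN.
  have ne : rem_lev B k != set0 by rewrite HN -ltnNge.
  have -> : (k - N = 0)%N by apply/eqP; rewrite subn_eq0 ltnW.
  apply: minset_union => //; apply/set_ltP => b c bB cC; move/set_ltP: lt; apply => //.
  exact: (subsetP (rem_lev_sub B k)).
have e0 : rem_lev B k = set0 by apply/eqP; rewrite HN.
by rewrite e0 set0U.
Qed.

Arguments level_union {B C}.

Lemma tower_level (s : seq {set T}) :
  (forall i j, (i < j < size s)%N -> set_lt (nth set0 s i) (nth set0 s j)) ->
  forall l, level (\bigcup_(S <- s) S) l != set0 ->
  exists S, S \in s /\ exists k, level (\bigcup_(S <- s) S) l = level S k.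
Proof.
elim: s => [|S0 s IH] Hlt l.
  rewrite big_nil /level rem_lev_set0.
  by have := minset_sub (set0 : {set T}); rewrite subset0 => /eqP ->; rewrite eqxx.
rewrite big_cons.
have lt : set_lt S0 (\bigcup_(S <- s) S).
  apply/set_ltP => b c bS0 /=; rewrite bigcup_seq => /bigcupP [S Ss cS].
  have := Hlt 0%N (index S s).+1; rewrite /= ltnS index_mem Ss => /(_ isT).
  rewrite nth_index // => /set_ltP; by apply.
have [N HN] := level_union lt; rewrite HN.
case: ltnP => lN ne.
  by exists S0; split; [rewrite inE eqxx | exists l].
have Hlt' : forall i j, (i < j < size s)%N -> set_lt (nth set0 s i) (nth set0 s j).
  by move=> i j ij; apply: (Hlt i.+1 j.+1).
have [S [Ss [k Ek]]] := IH Hlt' _ ne.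
by exists S; split; [rewrite inE Ss orbT | exists k].
Qed.

End Sum.


Section Rows.
Context {d : Order.disp_t} {T : finPOrderType d}.
Variables (S : {set T}) (h : nat) (c : nat -> 'I_3 -> T).
Hypothesis cS : forall k j, (k <= h)%N -> c k j \in S.
Hypothesis cinj : forall k j k' j', (k <= h)%N -> (k' <= h)%N -> c k j = c k' j' -> k = k' /\ j = j'.
Hypothesis csurj : forall x, x \in S -> exists k j, (k <= h)%N /\ c k j = x.
Hypothesis cchain : forall k j, (k < h)%N -> c k j < c k.+1 j.
Hypothesis canti : forall k, (k <= h)%N -> antichain [set c k j | j : 'I_3].

Definition row k := [set c k j | j : 'I_3].
Definition U k := [set x | [exists i : 'I_h.+1, (k <= i)%N && (x \in row i)]].
Definition V k := [set x | [exists i : 'I_h.+1, (i == k :> nat) && (x \in row i)]].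

Lemma chain_le k k' j : (k <= k' <= h)%N -> c k j <= c k' j.
Proof.
case/andP => /subnK <-; elim: (k' - k)%N => [|n IH] H; first exact: lexx.
rewrite addSn in H *; have H1 := IH (ltnW H); have H2 := ltW (cchain (n + k) j H); exact: le_trans H1 H2.
Qed.

Lemma inrow x k : reflect (exists j, x = c k j) (x \in row k).
Proof. by apply: (iffP imsetP) => [[j _ ->]|[j ->]]; exists j. Qed.

Lemma row_ord k k' j j' : (k <= h)%N -> (k' <= h)%N -> c k' j' < c k j -> (k' < k)%N.
Proof.
move=> kh k'h lt; rewrite ltnNge; apply/negP => kk'.
have := chain_le k k' j; rewrite kk' k'h => /(_ isT) le.
have lt' := lt_le_trans lt le.
case: (eqVneq j j') => [E|ne]; first by move: lt'; rewrite E ltxx.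
have r1 : c k' j' \in row k' by apply/inrow; exists j'.
have r2 : c k' j \in row k' by apply/inrow; exists j.
move/forall_inP: (canti k' k'h) => /(_ (c k' j') r1) H.
move/forall_inP: H => /(_ (c k' j) r2).
have -> : c k' j' != c k' j.
  by apply/eqP => /(cinj _ _ _ _ k'h k'h) [_ E]; rewrite E eqxx in ne.
by rewrite /= (ltW lt').
Qed.



Lemma minset_U k : Defs.minset (U k) = V k.
Proof.
apply/setP => x; apply/mnsP/idP => [[xU H]|].
  move: xU; rewrite inE => /existsP [i /andP [ki /inrow [j xe]]].
  rewrite inE; apply/existsP; exists i; rewrite andbC; apply/andP; split.
    by apply/inrow; exists j.
  rewrite eqn_leq ki andbT; apply/negP => /negP; rewrite -ltnNge => ki'.
  have kh : (k < h.+1)%N by apply: ltn_trans ki' (ltn_ord i).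
  have := H (c k j); rewrite inE => /(_ _) /negP; apply.
    by apply/existsP; exists (Ordinal kh); rewrite /= leqnn; apply/inrow; exists j.
  have kh' : (k < h)%N by rewrite -ltnS; exact: leq_trans ki' (ltn_ord i).
  have ih : (k.+1 <= i <= h)%N by rewrite ki' -ltnS ltn_ord.
  rewrite xe; exact: (lt_le_trans (cchain k j kh') (chain_le k.+1 i j ih)).
rewrite inE => /existsP [i /andP [/eqP ik /inrow [j xe]]]; split.
  rewrite inE; apply/existsP; exists i; rewrite ik leqnn /=; apply/inrow; exists j; rewrite xe; congr c; exact: ik.
move=> y; rewrite inE => /existsP [i' /andP [ki' /inrow [j' ye]]].
have h1 : (i <= h)%N by rewrite -ltnS ltn_ord.
have h2 : (i' <= h)%N by rewrite -ltnS ltn_ord.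
apply/negP; rewrite ye xe => /(row_ord i i' j j' h1 h2).
by rewrite ik ltnNge ki'.
Qed.

Lemma rem_lev_U k : rem_lev S k = U k.
Proof.
elim: k => [|k IH].
  apply/setP => x /=; rewrite inE; apply/idP/existsP => [xS|[i /andP [_ /inrow [j ->]]]].
    have [k [j [kh <-]]] := csurj x xS; exists (Ordinal (kh : (k < h.+1)%N)).
    by apply/andP; split => //; apply/inrow; exists j.
  by apply: cS; rewrite -ltnS.
rewrite /= IH minset_U; apply/setP => x; rewrite !inE; apply/andP/existsP.
  case=> /existsP H /existsP [i /andP [ki xi]]; exists i; rewrite xi andbT ltn_neqAle ki andbT.
  by apply/negP => /eqP E; apply: H; exists i; rewrite xi andbT E.
case=> i /andP [ki xi]; split; last by apply/existsP; exists i; rewrite xi ltnW.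
apply/negP => /existsP [i' /andP [/eqP ik xi']].
move: xi xi' => /inrow [j ->] /inrow [j'].
have h1 : (i <= h)%N by rewrite -ltnS ltn_ord.
have h2 : (i' <= h)%N by rewrite -ltnS ltn_ord.
move=> /(cinj _ _ _ _ h1 h2) [E _].
by move: ki; rewrite E ik ltnn.
Qed.

Lemma rows_level t : level S t != set0 -> (t <= h)%N /\ level S t = row t.
Proof.
have E : level S t = V t by rewrite /level rem_lev_U minset_U.
rewrite E => /set0Pn [x]; rewrite inE => /existsP [i /andP [/eqP it _]].
have th : (t <= h)%N by rewrite -it -ltnS ltn_ord.
split => //; apply/setP => y; rewrite inE; apply/existsP/idP => [[i' /andP [/eqP <- //]]|yr].
by exists (Ordinal (th : (t < h.+1)%N)); rewrite /= eqxx.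
Qed.

Lemma rows_level' t : (t <= h)%N -> level S t = row t.
Proof.
move=> th; rewrite /level rem_lev_U minset_U.
apply/setP => y; rewrite !inE; apply/existsP/idP => [[i' /andP [/eqP <- //]]|yr].
by exists (Ordinal (th : (t < h.+1)%N)); rewrite /= eqxx.
Qed.

Lemma card_row t : (t <= h)%N -> #|row t| = 3.
Proof.
move=> th; rewrite card_imset ?card_ord //.
by move=> i j /(cinj _ _ _ _ th th) [].
Qed.

End Rows.


Lemma iterS n (a : 'I_3) : val (iter n (@ordS 3) a) = ((a + n) %% 3)%N.
Proof.
elim: n => [|n IH] /=; first by rewrite addn0 modn_small.
by rewrite IH addnS -addn1 modnDml addn1.
Qed.

Section Rot.
Variable rel : 'I_3 -> 'I_3 -> Prop.
Hypothesis rot : forall i j, rel i j -> rel (ordS i) (ordS j).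
Lemma rot_iter n i j : rel i j -> rel (iter n (@ordS 3) i) (iter n (@ordS 3) j).
Proof. by elim: n => //= n IH /IH /rot. Qed.
Arguments rot_iter n {i j}.

Lemma full1 a : (forall j, rel a j) -> forall i j, rel i j.
Proof.
move=> H i j.
have := rot_iter (i + (3 - a)) (H (inord ((j + 2 * (i + (3 - a))) %% 3))).
have a3 := ltn_ord a; have i3 := ltn_ord i; have j3 := ltn_ord j.
have -> : iter (i + (3 - a)) (@ordS 3) a = i by apply/val_inj; rewrite iterS /=; lia.
suff -> : iter (i + (3 - a)) (@ordS 3) (inord ((j + 2 * (i + (3 - a))) %% 3)) = j by [].
apply/val_inj; rewrite iterS /= inordK; last by rewrite ltn_mod.
lia.
Qed.

Lemma full2 c : (forall i, rel i c) -> forall i j, rel i j.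
Proof.
move=> H i j.
have := rot_iter (j + (3 - c)) (H (inord ((i + 2 * (j + (3 - c))) %% 3))).
have a3 := ltn_ord c; have i3 := ltn_ord i; have j3 := ltn_ord j.
have -> : iter (j + (3 - c)) (@ordS 3) c = j by apply/val_inj; rewrite iterS /=; lia.
suff -> : iter (j + (3 - c)) (@ordS 3) (inord ((i + 2 * (j + (3 - c))) %% 3)) = i by [].
apply/val_inj; rewrite iterS /= inordK; last by rewrite ltn_mod.
lia.
Qed.

Lemma rot3 a b c : a != b -> a != c -> b != c -> rel a c -> rel b a.
Proof.
move=> ab ac bc /(rot_iter (b + (3 - a))).
have a3 := ltn_ord a; have b3 := ltn_ord b; have c3 := ltn_ord c.
have -> : iter (b + (3 - a)) (@ordS 3) a = b by apply/val_inj; rewrite iterS /=; lia.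
suff -> : iter (b + (3 - a)) (@ordS 3) c = a by [].
apply/val_inj; rewrite iterS /=.
move: ab ac bc; rewrite -!(inj_eq val_inj) /=.
move: a3 b3 c3; case: (nat_of_ord a) => [|[|[|]]] //; case: (nat_of_ord b) => [|[|[|]]] //;
  case: (nat_of_ord c) => [|[|[|]]] //.
Qed.
End Rot.


Lemma card3_neq {d} {T : finPOrderType d} (x y z : T) :
  #|[set x; y; z]| = 3 -> [/\ x != y, x != z & y != z].
Proof.
rewrite setUC !cardsU1 cards1 !in_setU1 !in_set1.
case: (eqVneq x y) => xy; case: (eqVneq x z) => xz; case: (eqVneq y z) => yz;
  subst; rewrite ?eqxx ?xy ?xz ?yz //=.
Qed.

Theorem lemma3p6 (d : Order.disp_t) (T : finPOrderType d) (eta : nat)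
  (R : {set T}) (l : nat) (x y z : T) (lx ly lz : nat) :
  (2 <= eta)%N ->
  in_N eta [set: T] ->
  is_retract R ->
  tower_of_nice_sections R ->
  #|level R l| = 3 ->
  level R l = [set x; y; z] ->
  x \in level [set: T] lx ->
  y \in level [set: T] ly ->
  z \in level [set: T] lz ->
  (lx <= ly <= lz)%N ->
  (lz - lx <= eta - 1)%N /\
  (lz - lx = eta - 1 -> (lx < ly < lz)%N).
Proof.
move=> eta2 [_ [_ [hor _]]] _ [s [Rdef [Snice Slt]]] card3 Elev xl yl zl /andP [lxy lyz].
set P := [set: T].
have L4 : forall u v i j, u \in level P i -> v \in level P j -> (i + eta <= j)%N -> u < v.
  move=> u v i j ul vl ij.
  have jh := lev_height vl.
  have [w wl wv] := lev_below (i + eta) ij vl.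
  have ih : (i < (height P).+1)%N by rewrite ltnS; apply: leq_trans jh; clear -ij; lia.
  move/forallP: hor => /(_ (Ordinal ih)) /=; rewrite (leq_trans ij jh) /=.
  move/set_ltP => H; exact: lt_le_trans (H _ _ ul wl) wv.
have L5 : forall u v w i j, u \in level P i -> v \in level P j -> (i + eta <= j.+1)%N ->
    v < w -> u < w.
  move=> u v w i j ul vl ij vw.
  have [m wm] := lev_exists P w (in_setT w).
  have := lev_lt vl wm vw => jm; apply: (L4 _ _ _ _ ul wm); clear -ij jm; lia.
have L6 : forall u v w i j, u \in level P i -> v \in level P j -> (i + eta <= j.+1)%N ->
    w < u -> w < v.
  move=> u v w i j ul vl ij wu.
  have [m wm] := lev_exists P w (in_setT w).
  have := lev_lt wm ul wu => mi; apply: (L4 _ _ _ _ wm vl); clear -ij mi; lia.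
have anti : forall u v, u \in level R l -> v \in level R l -> ~~ (u < v).
  move=> u v /mnsP [uB _] /mnsP [_ H]; exact: H.
have [xy xz yz] : [/\ x != y, x != z & y != z] by apply: card3_neq; rewrite -Elev.
have xR : x \in level R l by rewrite Elev !inE eqxx.
have yR : y \in level R l by rewrite Elev !inE eqxx orbT.
have zR : z \in level R l by rewrite Elev !inE eqxx !orbT.
have part1 : (lz < lx + eta)%N.
  rewrite ltnNge; apply/negP => H; have := anti _ _ xR zR; by rewrite (L4 _ _ _ _ xl zl H).
split; first by clear -part1; lia.
move=> Heq.
have A1 : (lx + eta <= lz.+1)%N by clear -Heq part1 eta2; lia.
have A2 : lx = ly -> (ly + eta <= lz.+1)%N by move=> <-.
have A3 : ly = lz -> (lx + eta <= ly.+1)%N by move=> ->.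
have ne : level R l != set0 by apply/negP => /eqP E; rewrite E cards0 in card3.
rewrite Rdef in ne.
have [S [Ss [t Et]]] := tower_level s Slt l ne.
rewrite -Rdef in Et.
have [Ssec _] := Snice S Ss.
case: Ssec => [[cS2 _]|[h1 [c [cS [cinj [csurj [cchain [canti [crot clev]]]]]]]]].
  have : (#|level S t| <= 2)%N.
    rewrite -cS2; apply: subset_leq_card; exact: subset_trans (minset_sub _) (rem_lev_sub S t).
  by rewrite -Et card3.
set hS := height S in h1 cS cinj csurj cchain canti crot clev.
have h1' : (1 <= hS)%N := h1.
have ltS : level S t != set0 by rewrite -Et; apply/eqP => E; rewrite E cards0 in card3.
have [th Lt] := rows_level S hS c cS cinj csurj cchain canti t ltS.
have Rt : row c t = [set x; y; z] by rewrite -Lt -Et.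
have inR : forall u, u \in [set x; y; z] -> exists j, u = c t j.
  by move=> u; rewrite -Rt => /inrow.
have [a xa] := inR x ltac:(by rewrite -Elev).
have [b yb] := inR y ltac:(by rewrite -Elev).
have [cc zc] := inR z ltac:(by rewrite -Elev).
have inrow3 : forall j, [\/ c t j = x, c t j = y | c t j = z].
  move=> j; have : c t j \in row c t by apply/inrow; exists j.
  rewrite Rt !inE => /orP [/orP [/eqP->|/eqP->]|/eqP->]; by [constructor 1|constructor 2|constructor 3].
have ab : a != b by apply/eqP => E; rewrite xa yb E eqxx in xy.
have acc : a != cc by apply/eqP => E; rewrite xa zc E eqxx in xz.
have bcc : b != cc by apply/eqP => E; rewrite yb zc E eqxx in yz.
have noful : forall k, (k < hS)%N -> (forall i j, c k i < c k.+1 j) -> False.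
  move=> k kh full; apply: (clev k).
  rewrite (rows_level' S hS c cS cinj csurj cchain canti k (ltnW kh)).
  rewrite (rows_level' S hS c cS cinj csurj cchain canti k.+1 kh).
  rewrite !(card_row hS c cinj) //; last exact: ltnW.
  split => //; apply/set_ltP => u v /inrow [i ->] /inrow [j ->]; exact: full.
have rotk : forall k, (k < hS)%N -> forall i j, c k i < c k.+1 j -> c k (ordS i) < c k.+1 (ordS j).
  move=> k kh i j; apply: crot => //; exact: ltnW.
have xl' := xl; have yl' := yl; have zl' := zl.
apply/andP; split; rewrite ltn_neqAle ?lxy ?lyz andbT; apply/negP => /eqP E.
-
  case: (ltnP t hS) => tl.
    apply: (noful t tl); apply: (full2 (fun i j => c t i < c t.+1 j) (rotk t tl) cc) => i.
    have zw : z < c t.+1 cc by rewrite zc; exact: cchain.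
    case: (inrow3 i) => ->.
    + apply: (L5 x z _ lx lz xl zl _ zw); exact: A1.
    + apply: (L5 y z _ ly lz yl zl _ zw); exact: A2 E.
    + exact: zw.
  have tk : t = t.-1.+1 by clear -th tl h1'; lia.
  have kl : (t.-1 < hS)%N by clear -th tl h1'; lia.
  move: inrow3 xa yb zc; rewrite tk => inrow3 xa yb zc.
  apply: (noful _ kl); apply: (full1 (fun i j => c t.-1 i < c t.-1.+1 j) (rotk _ kl) b) => j.
  have bw : c t.-1 b < y by rewrite yb; exact: cchain.
  have aw : c t.-1 a < x by rewrite xa; exact: cchain.
  have bz : c t.-1 b < z by apply: (L6 y z _ ly lz yl zl _ bw); exact: A2 E.
  have az : c t.-1 a < z by apply: (L6 x z _ lx lz xl zl _ aw); exact: A1.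
  case: (inrow3 j) => ->.
  + rewrite xa; apply: (rot3 (fun i j => c t.-1 i < c t.-1.+1 j) (rotk _ kl) _ _ _ ab acc bcc); by rewrite -zc.
  + exact: bw.
  + exact: bz.
-
  case: (posnP t) => t0.
    have kl : (0 < hS)%N by clear -h1'; lia.
    move: inrow3 xa yb zc; rewrite t0 => inrow3 xa yb zc.
    apply: (noful _ kl); apply: (full1 (fun i j => c 0 i < c 1 j) (rotk _ kl) a) => j.
    have jw : c 0 j < c 1 j by exact: cchain.
    case: (inrow3 j) => E'; rewrite E' in jw.
    + by rewrite -xa.
    + rewrite -xa; apply: (L5 x y _ lx ly xl yl _ jw); exact: A3 E.
    + rewrite -xa; apply: (L5 x z _ lx lz xl zl _ jw); exact: A1.
  have tk : t = t.-1.+1 by clear -t0; lia.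
  have kl : (t.-1 < hS)%N by clear -t0 th; lia.
  move: inrow3 xa yb zc; rewrite tk => inrow3 xa yb zc.
  apply: (noful _ kl); apply: (full1 (fun i j => c t.-1 i < c t.-1.+1 j) (rotk _ kl) a) => j.
  have aw : c t.-1 a < x by rewrite xa; exact: cchain.
  case: (inrow3 j) => ->.
  + exact: aw.
  + apply: (L6 x y _ lx ly xl yl _ aw); exact: A3 E.
  + apply: (L6 x z _ lx lz xl zl _ aw); exact: A1.
Qed.
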